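(* Let $k\geq2$, $n$, $r$ be positive integers with $n<r<\frac{(k-1)(2n)}{k}$, and let $\mathcal{F}\subseteq\mathcal{H}^r(M_n)$ be $k$-wise intersecting. Let $\sigma$ be a good cyclic ordering such that $|\mathcal{F}_\sigma|=r$ and every member of $\mathcal{F}_\sigma$ contains $\sigma(2n)$. Let $\mu$ be obtained from $\sigma$ by exchanging the entries in positions $n-1$ and $2n-1$. If $|\mathcal{F}_\mu|=r$, then every member of $\mathcal{F}_\mu$ contains $\sigma(2n)$.
   Context: $M_n$ is the graph with vertex set $\{1,\dots,2n\}$ and edges $\{j,n+j\}$, $j\in[n]$; the two endpoints of an edge are partners. $\mathcal{H}^r(M_n)$ is the family of $r$-element vertex sets that are either independent or contain a maximum independent set (i.e. contain one endpoint of every edge). A family is $k$-wise intersecting if any $k$ of its members have nonempty common intersection. A good cyclic ordering is a bijection $\sigma$ from positions $[2n]$ to the vertex set such that for every $j\in[n]$, $\sigma(j)$ and $\sigma(j+n)$ are partners. A $\sigma$-interval of length $r$ is $\{\sigma(x),\sigma(x+1),\dots,\sigma(x+r-1)\}$ for some $x\in[2n]$, indices modulo $2n$; $\mathcal{F}_\sigma$ is the set of members of $\mathcal{F}$ that are $\sigma$-intervals. *)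

(* Defs.v *)
From mathcomp Require Import all_boot.
Set Implicit Arguments. Unset Strict Implicit. Unset Printing Implicit Defensive.

(* Conventions: vertex v : 'I_(2*n) stands for the vertex v+1 of M_n, and
   position p : 'I_(2*n) stands for position p+1.  So the edges of M_n are
   {j, j+n} for 0 <= j < n (0-indexed). *)

Definition partners n (u v : 'I_(2 * n)) : bool :=
  (val v == val u + n) || (val u == val v + n).

Definition independent n (S : {set 'I_(2 * n)}) : bool :=
  [forall u in S, forall v in S, ~~ partners u v].

Definition contains_max_indep n (S : {set 'I_(2 * n)}) : bool :=
  [forall j : 'I_(2 * n), (val j < n) ==>
     ((j \in S) || [exists v in S, partners j v])].

Definition Hr (r n : nat) : {set {set 'I_(2 * n)}} :=
  [set S : {set 'I_(2 * n)} | (#|S| == r) && (independent S || contains_max_indep S)].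

(* any k (not necessarily distinct) members have nonempty common intersection *)
Definition kwise_intersecting (T : finType) (k : nat) (F : {set {set T}}) : Prop :=
  forall f : 'I_k -> {set T}, (forall i, f i \in F) -> \bigcap_(i < k) f i != set0.

Definition good_cyclic n (s : 'I_(2 * n) -> 'I_(2 * n)) : Prop :=
  injective s /\
  forall p q : 'I_(2 * n), val p < n -> val q = val p + n -> partners (s p) (s q).

Definition interval n (s : 'I_(2 * n) -> 'I_(2 * n)) (r : nat) (x : 'I_(2 * n))
  : {set 'I_(2 * n)} :=
  [set s p | p : 'I_(2 * n) & [exists i : 'I_r, val p == (val x + val i) %% (2 * n)]].

Definition restrict n (F : {set {set 'I_(2 * n)}}) (s : 'I_(2 * n) -> 'I_(2 * n))
  (r : nat) : {set {set 'I_(2 * n)}} :=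
  [set A in F | [exists x : 'I_(2 * n), A == interval s r x]].

Definition exchange N (T : Type) (s : 'I_N -> T) (a b : nat) : 'I_N -> T :=
  fun p => s (if val p == a then insubd p b else if val p == b then insubd p a else p).

(* Main.v *)
Require Import Defs.
From mathcomp Require Import all_boot zify.
Set Implicit Arguments. Unset Strict Implicit. Unset Printing Implicit Defensive.

Ltac normval :=
  repeat match goal with
  | |- context [@isSub.val_subdef ?a ?b ?c ?d ?y] =>
      change (@isSub.val_subdef a b c d y) with (nat_of_ord y)
  | H : context [@isSub.val_subdef ?a ?b ?c ?d ?y] |- _ =>
      change (@isSub.val_subdef a b c d y) with (nat_of_ord y) in H
  end.

Definition posin (N r x p : nat) : bool :=
  if x <= p then p - x < r else p + N - x < r.

Lemma mem_interval n (s : 'I_(2 * n) -> 'I_(2 * n)) r x q :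
  injective s -> r <= 2 * n ->
  (s q \in interval s r x) = posin (2 * n) r x q.
Proof.
move=> si hr; rewrite /interval mem_imset // inE /posin; normval.
have hq := ltn_ord q; have hx := ltn_ord x.
apply/existsP/idP.
- case=> i /eqP /= hi; have hi' := ltn_ord i; normval.
  case: (ltnP (nat_of_ord x + nat_of_ord i) (2 * n)) => h.
  + rewrite modn_small // in hi; rewrite hi; case: ifP => h2; lia.
  + normval. have e: nat_of_ord x + nat_of_ord i = (nat_of_ord x + nat_of_ord i - 2 * n) + 2 * n by lia.
    rewrite e modnDr modn_small in hi; last by lia.
    rewrite hi; case: ifP => h2; lia.
- case: ifP => hxq hlt.
  + exists (Ordinal hlt); apply/eqP => /=; normval.
    rewrite (_ : nat_of_ord x + (nat_of_ord q - nat_of_ord x) = nat_of_ord q); last by lia.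
    by rewrite modn_small.
  + exists (Ordinal hlt); apply/eqP => /=; normval.
    rewrite (_ : nat_of_ord x + (nat_of_ord q + 2 * n - nat_of_ord x) = nat_of_ord q + 2 * n); last by lia.
    by rewrite modnDr modn_small.
Qed.

Definition sw (a b p : nat) : nat := if p == a then b else if p == b then a else p.

Lemma sw_inv a b p : sw a b (sw a b p) = p.
Proof. rewrite /sw; case: (eqVneq p a) => [->|hpa]; case: (eqVneq b a) => [->|hba] //=;
 repeat (case: eqP => //=); lia. Qed.

Lemma mu_mem n (sigma : 'I_(2 * n) -> 'I_(2 * n)) r x q :
  injective sigma -> r <= 2 * n -> 0 < n ->
  (sigma q \in interval (exchange sigma n.-2 (2 * n).-2) r x)
   = posin (2 * n) r x (sw n.-2 (2 * n).-2 q).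
Proof.
move=> si hr hn.
pose swo := fun p : 'I_(2 * n) => if val p == n.-2 then insubd p (2 * n).-2
   else if val p == (2 * n).-2 then insubd p n.-2 else p.
have hv : forall p, nat_of_ord (swo p) = sw n.-2 (2 * n).-2 p.
  move=> p; rewrite /swo /sw; normval.
  case: eqP => _; first by rewrite val_insubd ifT //; lia.
  case: eqP => _; first by rewrite val_insubd ifT //; lia.
  by [].
have hi : forall p, swo (swo p) = p.
  by move=> p; apply: val_inj; rewrite /= hv hv sw_inv.
have e : exchange sigma n.-2 (2 * n).-2 = fun p => sigma (swo p) by [].
have inj : injective (fun p => sigma (swo p)).
  by move=> a b /si h; rewrite -(hi a) -(hi b) h.
by rewrite e -{1}(hi q) mem_interval // hv.
Qed.

Lemma full_sigma n (sigma : 'I_(2 * n) -> 'I_(2 * n)) r F (z : 'I_(2 * n)) :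
  injective sigma -> r <= 2 * n -> nat_of_ord z = (2 * n).-1 ->
  #|restrict F sigma r| = r ->
  (forall A, A \in restrict F sigma r -> sigma z \in A) ->
  forall x : 'I_(2 * n), posin (2 * n) r x (2 * n).-1 -> interval sigma r x \in F.
Proof.
move=> si hr hz hc hA.
set Z := [set x : 'I_(2 * n) | posin (2 * n) r x (2 * n).-1].
pose g := fun i : 'I_r => insubd z (nat_of_ord i + (2 * n - r)).
have cZ : #|Z| <= r.
  apply: (@leq_trans #|g @: [set: 'I_r]|); last first.
    by rewrite (leq_trans (leq_imset_card _ _)) // cardsT card_ord.
  apply: subset_leq_card; apply/subsetP => x; rewrite inE /posin => hx.
  have hxn := ltn_ord x.
  have h1 : nat_of_ord x - (2 * n - r) < r.
    by move: hx; case: ifP => h2 h3; lia.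
  apply/imsetP; exists (Ordinal h1); first by [].
  apply: val_inj; rewrite /g val_insubd /=; normval.
  rewrite ifT; first by move: hx; case: ifP => h2 h3; lia.
  by move: hx; case: ifP => h2 h3; lia.
have sub : restrict F sigma r \subset (interval sigma r) @: Z.
  apply/subsetP => A hA'; have := hA _ hA'.
  move: hA'; rewrite inE => /andP [AF /existsP [x /eqP ->]].
  rewrite mem_interval // hz => hp.
  by apply/imsetP; exists x => //; rewrite inE.
have eqs : restrict F sigma r = (interval sigma r) @: Z.
  apply/eqP; rewrite eqEcard sub hc.
  exact: (leq_trans (leq_imset_card _ _) cZ).
move=> x hx.
have : interval sigma r x \in restrict F sigma r.
  by rewrite eqs; apply/imsetP; exists x => //; rewrite inE.
by rewrite inE => /andP [].
Qed.

From Stdlib Require Import Classical.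

Lemma counting n m r (S : {set 'I_(2 * n)}) (z : 'I_(2 * n)) :
  0 < m -> m <= n - 1 -> r + m = 2 * n -> r <= #|S| ->
  (forall y : 'I_(2 * n), nat_of_ord y = m - 1 -> y \notin S) ->
  (exists x : 'I_(2 * n), x \in S /\ x + 2 <= m) ->
  exists (x1 s' : 'I_(2 * n)) (e Q : nat),
    [/\ x1 \in S, x1 + 2 <= m, s' \in S, n - 1 <= s' <= n + m - 2
      & e <= 1 /\ (s' - m) + e = x1 + Q * m].
Proof.
move=> hm hmn hrm hS hm1 [x [xS xm]].
apply: NNPP => H.
pose c := (n - m - 1) %% m.
pose d := (n - m - 1) %/ m.
have hcd : n - m - 1 = d * m + c by rewrite /c /d -divn_eq.
have hc : c < m by rewrite /c ltn_mod.
pose psi := fun y => if c <= y then d * m + y else d * m + m + y.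
have psi_r : forall y, y < m -> n - m - 1 <= psi y <= n - 2.
  move=> y hy; rewrite /psi; case: ifP => h; lia.
have psi_e : forall y, y < m -> exists Q, psi y = y + Q * m.
  move=> y hy; rewrite /psi; case: ifP => h.
  - by exists d; lia.
  - by exists d.+1; rewrite mulSn; lia.
have psi_i : forall y1 y2, y1 < m -> y2 < m -> psi y1 = psi y2 -> y1 = y2.
  move=> y1 y2 h1 h2; rewrite /psi; case: ifP => h3; case: ifP => h4; lia.
pose J := fun y : nat => (y + 2 <= m) && (insubd z y \in S).
have hJ : exists y, J y.
  exists x; rewrite /J xm /=.
  have -> : insubd z x = x by apply: val_inj; rewrite val_insubd ltn_ord.
  by [].
have forb : forall y s e Q, J y -> y < m -> e <= 1 ->
    psi s + e = y + Q * m -> s < m -> insubd z (psi s + m) \notin S.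
  move=> y s e Q jy hy he hQ hs; apply/negP => hin; apply: H.
  move: jy; rewrite /J => /andP [hy2 yS].
  have hyN : y < 2 * n by lia.
  have hsN : psi s + m < 2 * n by have := psi_r s hs; lia.
  exists (insubd z y), (insubd z (psi s + m)), e, Q.
  rewrite !val_insubd hyN hsN; split => //.
  - have := psi_r s hs; lia.
  - split => //; lia.
case: (ex_minnP hJ) => j0 hj0 hmin.
pose yx := if j0 == 0 then m - 1 else j0 - 1.
have yx_m : yx < m by rewrite /yx; move: hj0; rewrite /J; case: eqP => _ /andP[]; lia.
have yx_J : ~~ J yx.
  rewrite /yx; case: eqP => h0.
  - by rewrite /J; apply/negP => /andP []; lia.
  - by apply/negP => /hmin; move: hj0; rewrite /J => /andP []; lia.
have yx_f : insubd z (psi yx + m) \notin S.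
  have [Q hQ] := psi_e _ yx_m.
  have hj0m : j0 < m by move: hj0; rewrite /J => /andP []; lia.
  apply: (forb j0 yx 1 (if j0 == 0 then Q.+1 else Q)) => //.
  rewrite hQ /yx; case: eqP => h0.
  - by rewrite mulSn; lia.
  - lia.
pose phi := fun y : 'I_m.+1 => insubd z
  (if nat_of_ord y == m then psi yx + m
   else if J y then psi y + m else nat_of_ord y).
have phiv : forall y : 'I_m.+1, nat_of_ord (phi y) =
   (if nat_of_ord y == m then psi yx + m
   else if J y then psi y + m else nat_of_ord y).
  move=> y; rewrite /phi val_insubd ifT //.
  have hy := ltn_ord y.
  case: eqP => h1; first by have := psi_r _ yx_m; lia.
  case: ifP => h2; last by lia.
  by have := psi_r y (_ : y < m); lia.
have phi_inj : injective phi.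
  move=> y1 y2 /(congr1 (@nat_of_ord _)); rewrite !phiv => e.
  have hy1 := ltn_ord y1; have hy2 := ltn_ord y2.
  apply: val_inj => /=; normval.
  have p1 := psi_r _ yx_m.
  have hJx : forall y : 'I_m.+1, nat_of_ord y != m -> J y ->
     psi y + m = psi yx + m -> False.
    move=> y hy hjy e2; have hym : y < m by have := ltn_ord y; move: hy; case: eqP; lia.
    have h : nat_of_ord y = yx by apply: psi_i => //; lia.
    by move: yx_J; rewrite -h hjy.
  have hsm : forall y : 'I_m.+1, nat_of_ord y != m -> 
     (y < m) /\ n - 1 <= psi y + m.
    move=> y hy; have hym : y < m by have := ltn_ord y; move: hy; case: eqP; lia.
    by split=> //; have := psi_r _ hym; lia.
  case: (eqVneq (nat_of_ord y1) m) e => h1; case: (eqVneq (nat_of_ord y2) m) => h2 //;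
    try (by rewrite h1 h2).
  - case: ifP => h3 e.
    + by case: (hJx y2 h2 h3); rewrite e.
    + have [] := hsm y2 h2; lia.
  - case: ifP => h3 e.
    + by case: (hJx y1 h1 h3); rewrite e.
    + have [] := hsm y1 h1; lia.
  - have [a1 b1] := hsm y1 h1; have [a2 b2] := hsm y2 h2.
    case: ifP => h3; case: ifP => h4 e; try lia.
    by apply: psi_i => //; lia.
have sub : [set phi y | y in 'I_m.+1] \subset ~: S.
  apply/subsetP => v /imsetP [y _ ->]; rewrite inE.
  have hy := ltn_ord y.
  rewrite /phi; case: eqP => h1; first exact: yx_f.
  case: ifP => h2.
  - have hym : y < m by lia.
    have [Q hQ] := psi_e _ hym.
    by apply: (forb y y 0 Q) => //; lia.
  - case: (eqVneq (nat_of_ord y) (m - 1)) => h3.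
    + apply: hm1; rewrite val_insubd ifT //; lia.
    + move: h2; rewrite /J; have -> : (nat_of_ord y + 2 <= m) = true by lia.
      by move=> /= ->.
have := subset_leq_card sub; rewrite card_imset // card_ord.
have := cardsC S; rewrite card_ord => h1 h2. move: hS h1 h2. set cS := #|S|. set cC := #|~: S|. lia.
Qed.

Definition ystart (m x1 s Q j : nat) : nat :=
  if j < Q then x1 + j * m else s + (j - Q) * m.

Lemma arith_cov m r k x1 s e Q p : 0 < m -> e <= 1 -> s + e = x1 + Q * m ->
  r < (k - 1) * m -> s + 1 < r -> x1 <= p -> p < x1 + r -> p + 2 < r + m ->
  exists j, j.+1 < k /\
   (j = Q -> s <= p < s + m) /\
   (j <> Q -> minn (ystart m x1 s Q j) (r - 1) <= p < minn (ystart m x1 s Q j) (r - 1) + m).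
Proof.
move=> hm he hQ hk hs h1 h2 h3.
have hQk : Q < k - 1.
  by rewrite -(ltn_pmul2r hm); apply: leq_ltn_trans hk; lia.
case: (ltnP p (x1 + Q * m)) => hp.
- set D := (p - x1) %/ m.
  have d1 : D * m <= p - x1 by apply: leq_trunc_div.
  have d2 : p - x1 < D.+1 * m by apply: ltn_ceil.
  rewrite mulSn in d2.
  have hDQ : D < Q by rewrite -(ltn_pmul2r hm); lia.
  exists D; split; first by lia.
  split; first by lia.
  by move=> _; rewrite /ystart hDQ; lia.
- set D := (p - s) %/ m.
  have d1 : D * m <= p - s by apply: leq_trunc_div.
  have d2 : p - s < D.+1 * m by apply: ltn_ceil.
  rewrite mulSn in d2.
  exists (Q + D); split.
    have : (Q + D) * m <= r by rewrite mulnDl; lia.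
    move=> h; have : (Q + D) * m < (k - 1) * m by lia.
    rewrite ltn_pmul2r //; lia.
  split.
    move=> hD; have D0 : D = 0 by lia.
    by rewrite D0 in d2; lia.
  move=> hD; rewrite /ystart.
  have -> : (Q + D < Q) = false by lia.
  have -> : Q + D - Q = D by lia.
  lia.
Qed.

Lemma posin_L1 N r x p : x + r <= N -> p < N -> posin N r x p = (x <= p < x + r).
Proof. by move=> h1 h2; rewrite /posin; case: (leqP x p) => h; apply/idP/idP; lia. Qed.

Lemma posin_L2 N r m a p : r + m = N -> a + m < N -> p < N ->
  posin N r (a + m) p = ~~ (a <= p < a + m).
Proof. by move=> h1 h2 h3; rewrite /posin; case: (leqP (a + m) p) => h; apply/idP/idP; lia. Qed.

Lemma cover_contra n k r m (F : {set {set 'I_(2 * n)}}) (sigma : 'I_(2 * n) -> 'I_(2 * n)) (z : 'I_(2 * n))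
   (x1 s' : 'I_(2 * n)) e Q :
  injective sigma -> 2 <= k -> 0 < m -> r + m = 2 * n -> m <= n - 1 -> r < (k - 1) * m ->
  (forall x : 'I_(2 * n), posin (2 * n) r x (2 * n).-1 -> interval sigma r x \in F) ->
  interval (exchange sigma n.-2 (2 * n).-2) r x1 \in F -> x1 + 2 <= m ->
  interval (exchange sigma n.-2 (2 * n).-2) r s' \in F -> n - 1 <= s' <= n + m - 2 ->
  e <= 1 -> (s' - m) + e = x1 + Q * m ->
  ~ kwise_intersecting k F.
Proof.
move=> si hk hm hrm hmn hkm full hx1F hx1 hsF hs' he hQ hkw.
set mu := exchange sigma n.-2 (2 * n).-2.
pose s := s' - m.
pose W := fun a => interval sigma r (insubd z (a + m)).
pose G := fun j => if j == Q then interval mu r s'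
                   else W (minn (ystart m x1 s Q j) (r - 1)).
pose f := fun i : 'I_k => if nat_of_ord i == 0 then interval mu r x1 else G (nat_of_ord i).-1.
have hn : 0 < n by lia.
have hr : r <= 2 * n by lia.
have WF : forall a, a <= r - 1 -> W a \in F.
  move=> a ha; apply: full; rewrite val_insubd ifT; last by lia.
  rewrite /posin; case: ifP => h; lia.
have fF : forall i, f i \in F.
  move=> i; rewrite /f; case: ifP => _ //; rewrite /G; case: ifP => _ //.
  by apply: WF; rewrite geq_min; apply/orP; right.
have := hkw f fF; apply/negP; rewrite negbK; apply/eqP/setP => v; rewrite inE.
apply/negP => /bigcapP hall.
have [sinv h1 h2] := injF_bij si.
have ev : v = sigma (sinv v) by rewrite h2.
move: hall; rewrite ev; set q := sinv v => hall.
have memmu : forall y, (sigma q \in interval mu r y) = posin (2 * n) r y (sw n.-2 (2 * n).-2 q).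
  by move=> y; rewrite /mu mu_mem.
have memW : forall a, a <= r - 1 -> (sigma q \in W a) = ~~ (a <= q < a + m).
  move=> a ha; rewrite /W mem_interval // val_insubd ifT; last by lia.
  by apply: posin_L2 => //; lia.
have hq := ltn_ord q.
have hQk : Q.+1 < k.
  have : Q * m < (k - 1) * m by lia.
  rewrite ltn_pmul2r //; lia.
have i0 : 0 < k by lia.
have := hall (Ordinal i0) isT; rewrite /f /= memmu posin_L1; last 2 first.
  - lia.
  - rewrite /sw; case: eqP => _; first by lia. case: eqP => _; lia.
rewrite /sw; case: eqP => hqa.
  by lia.
case: eqP => hqb.
  move=> _; have := hall (Ordinal hQk) isT; rewrite /f /= /G eqxx memmu /sw.
  rewrite ifF; last by apply/eqP; lia.
  rewrite ifT; last by apply/eqP; lia.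
  have -> : nat_of_ord s' = s + m by rewrite /s; lia.
  rewrite posin_L2; lia.
move=> hin.
have hs1 : s' - m + 1 < r by lia.
move: hin => /andP [hin1 hin2].
have hq2 : q + 2 < r + m by lia.
have [j [hj [hj1 hj2]]] := arith_cov hm he hQ hkm hs1 hin1 hin2 hq2.
have := hall (Ordinal hj) isT; rewrite /f /= /G.
have hswq : sw n.-2 (2 * n).-2 q = q.
  by rewrite /sw; case: eqP => // _; case: eqP.
case: (eqVneq j Q) => hjQ.
- rewrite memmu hswq; normval.
  have -> : nat_of_ord s' = (s' - m) + m by lia.
  rewrite posin_L2; first (by rewrite (hj1 hjQ)); lia.
- rewrite memW; last by rewrite geq_min; apply/orP; right.
  by move/eqP: hjQ => hjQ; rewrite hj2.
Qed.

Theorem lemma3p2 (k n r : nat) (hk : 2 <= k) (hn : 0 < n) (hr : 0 < r)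
  (hnr : n < r) (hrk : r * k < (k - 1) * (2 * n))
  (F : {set {set 'I_(2 * n)}}) (hF : F \subset Hr r n)
  (hFk : kwise_intersecting k F)
  (sigma : 'I_(2 * n) -> 'I_(2 * n)) (hsigma : good_cyclic sigma)
  (z : 'I_(2 * n)) (hz : val z = (2 * n).-1)
  (hFs : #|restrict F sigma r| = r)
  (hFs2 : forall A, A \in restrict F sigma r -> sigma z \in A) :
  #|restrict F (exchange sigma n.-2 (2 * n).-2) r| = r ->
  forall A, A \in restrict F (exchange sigma n.-2 (2 * n).-2) r -> sigma z \in A.
Proof.
move=> hcard A hA.
have si : injective sigma by case: hsigma.
have hr2 : r < 2 * n.
  have : r * k < k * (2 * n) by apply: (leq_trans hrk); rewrite leq_mul2r leq_subr orbT.
  by rewrite mulnC ltn_pmul2l //; lia.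
set m := 2 * n - r.
have hrm : r + m = 2 * n by rewrite /m; lia.
have hm : 0 < m by rewrite /m; lia.
have hmn : m <= n - 1 by rewrite /m; lia.
have hkm : r < (k - 1) * m.
  move: hrk; rewrite -hrm; nia.
have hrN : r <= 2 * n by lia.
have hzv : nat_of_ord z = (2 * n).-1 by rewrite -hz.
have full := full_sigma si hrN hzv hFs hFs2.
set mu := exchange sigma n.-2 (2 * n).-2.
set S := [set y : 'I_(2 * n) | interval mu r y \in F].
have hS : r <= #|S|.
  rewrite -{1}hcard.
  apply: (leq_trans _ (leq_imset_card (interval mu r) S)).
  apply: subset_leq_card; apply/subsetP => B.
  rewrite inE => /andP [BF /existsP [y /eqP eB]].
  by apply/imsetP; exists y; rewrite // inE -eB.
move: hA; rewrite inE => /andP [AF /existsP [x /eqP eA]].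
rewrite eA /mu mu_mem // hzv.
have hsz : sw n.-2 (2 * n).-2 (2 * n).-1 = (2 * n).-1.
  rewrite /sw; case: eqP => h1; first lia.
  by case: eqP => h2; first lia.
rewrite hsz.
have hx := ltn_ord x.
case: (leqP m x) => hxm.
  by rewrite /posin ifT; lia.
exfalso.
have hm1 : forall y : 'I_(2 * n), nat_of_ord y = m - 1 -> y \notin S.
  move=> y hy; apply/negP; rewrite inE => hyF.
  have eq : interval mu r y = interval sigma r y.
    apply/setP => v.
    have [sinv h1 h2] := injF_bij si.
    rewrite -(h2 v) /mu mu_mem // mem_interval //.
    have hsv := ltn_ord (sinv v).
    rewrite !posin_L1; try lia.
    + rewrite /sw; case: ifP => /eqP h3; first by apply/idP/idP; lia.
      by case: ifP => /eqP h4; apply/idP/idP; lia.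
    + rewrite /sw; case: ifP => /eqP h3; first lia.
      case: ifP => /eqP h4; lia.
  have : interval sigma r y \in restrict F sigma r.
    by rewrite inE -eq hyF /=; apply/existsP; exists y; rewrite eq.
  move/hFs2; rewrite mem_interval // hzv /posin ifT; lia.
have hxS : x \in S by rewrite inE -eA.
have hx2 : x + 2 <= m.
  case: (eqVneq (nat_of_ord x) (m - 1)) => h.
    by move: (hm1 x h); rewrite hxS.
  lia.
have [x1 [s' [e [Q [x1S hx1 s'S hs' [he hQ]]]]]] :=
  counting z hm hmn hrm hS hm1 (ex_intro _ x (conj hxS hx2)).
apply: (cover_contra z si hk hm hrm hmn hkm full _ hx1 _ hs' he hQ hFk).
- by move: x1S; rewrite inE.
- by move: s'S; rewrite inE.
Qed.
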